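(* Let $(A,W)$ be a Pratt comonoid, $x_0\supseteq x_1\supseteq\cdots$ an $\omega$-indexed descending chain of elements of $W$, and $y_0\subseteq y_1\subseteq\cdots$ an $\omega$-indexed ascending chain of elements of $W$, such that either $\bigcap_{n\in\omega}x_n=\emptyset$ or $\bigcup_{n\in\omega}y_n=A$. Then $\bigcup_{n\in\omega}(x_n\cap y_n)\in W$.
   Context: A Pratt comonoid is a pair $(A,W)$ where $A$ is a set and $W$ is a set of subsets of $A$ such that (i) $\emptyset\in W$ and $A\in W$; (ii) whenever $C\subseteq A\times A$ is such that for every $a\in A$ both the $a$-th row $\{b\mid (a,b)\in C\}$ and the $a$-th column $\{b\mid (b,a)\in C\}$ belong to $W$ (a crossword over $W$), the diagonal $\{b\mid (b,b)\in C\}$ also belongs to $W$. *)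

(* Defs.v *)
From mathcomp Require Import all_boot.
From mathcomp Require Import boolp classical_sets.
Set Implicit Arguments. Unset Strict Implicit. Unset Printing Implicit Defensive.
Local Open Scope classical_set_scope.

Definition crossword (A : Type) (W : set (set A)) (C : set (A * A)) : Prop :=
  forall a : A, W [set b | C (a, b)] /\ W [set b | C (b, a)].

Definition pratt_comonoid (A : Type) (W : set (set A)) : Prop :=
  W set0 /\ W setT /\
  (forall C : set (A * A), crossword W C -> W [set b | C (b, b)]).

(* Main.v *)
Require Import Defs.
From mathcomp Require Import all_boot.
From mathcomp Require Import boolp classical_sets.
Local Open Scope classical_set_scope.

Lemma min_ex (P : nat -> Prop) : (exists n, P n) ->
  exists n, P n /\ forall m, P m -> (n <= m)%N.
Proof.
move=> [n Pn]; elim: n {-2}n (leqnn n) Pn => [|k IH] n.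
  rewrite leqn0 => /eqP -> P0; exists 0; split => // m _.
move=> lenk Pn.
have [H|H] := pselect (exists m, (m < n)%N /\ P m).
  case: H => m [ltmn Pm]; apply: (IH m) => //.
  by rewrite -ltnS (leq_trans ltmn).
exists n; split => // m Pm; rewrite leqNgt; apply/negP => ltmn.
by apply: H; exists m.
Qed.

Theorem lemma7p2 (A : Type) (W : set (set A))
  (x y : nat -> set A) :
  pratt_comonoid W ->
  (forall n, W (x n)) -> (forall n, (x n.+1 `<=` x n)) ->
  (forall n, W (y n)) -> (forall n, (y n `<=` y n.+1)) ->
  (\bigcap_n x n = set0 \/ \bigcup_n y n = setT) ->
  W (\bigcup_n (x n `&` y n)).
Proof.
move=> [W0 [WT HC]] Wx xd Wy yi Hcase.
have xm : forall n m, (n <= m)%N -> x m `<=` x n.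
  move=> n m /subnK <-; elim: (m - n) => [|k IH] //= z Hz.
  by apply: IH; apply: xd.
have ym : forall n m, (n <= m)%N -> y n `<=` y m.
  move=> n m /subnK <-; elim: (m - n) => [|k IH] //= z Hz.
  by apply: yi; apply: IH.
pose C : set (A * A) := fun p => exists n, y n p.1 /\ x n p.2.
have -> : \bigcup_n (x n `&` y n) = [set b | C (b, b)].
  apply/seteqP; split => b /=.
    by move=> [n _ [H1 H2]]; exists n.
  by move=> [n [H1 H2]]; exists n.
apply: HC => a; split.
- have [[n Hn]|H] := pselect (exists n, y n a).
    have [k [yk kmin]] := @min_ex (fun m => y m a) (ex_intro _ n Hn).
    have -> : [set b | C (a, b)] = x k; last exact: Wx.
    apply/seteqP; split => b /=.
      by move=> [m [H1 H2]]; apply: (xm k m (kmin m H1)).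
    by move=> Hb; exists k.
  have -> : [set b | C (a, b)] = set0; last exact: W0.
  apply/seteqP; split => b //= [m [H1 _]]; apply: H; by exists m.
- have [Hall|Hn] := pselect (forall n, x n a).
    case: Hcase => Hc.
      have : (\bigcap_n x n) a by move=> n _; apply: Hall.
      by rewrite Hc.
    have -> : [set b | C (b, a)] = setT; last exact: WT.
    apply/seteqP; split => b //= _.
    have : (\bigcup_n y n) b by rewrite Hc.
    by move=> [n _ Hb]; exists n.
  have [k [nk kmin]] : exists k, ~ x k a /\ forall m, ~ x m a -> (k <= m)%N.
    apply: (@min_ex (fun m => ~ x m a)); by apply/(existsNP (fun m => x m a)).
  case: k nk kmin => [|k] nk kmin.
    have -> : [set b | C (b, a)] = set0; last exact: W0.
    apply/seteqP; split => b //= [m [_ H2]]; apply: nk.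
    exact: (xm 0 m (leq0n m)).
  have -> : [set b | C (b, a)] = y k; last exact: Wy.
  apply/seteqP; split => b /=.
    move=> [m [H1 H2]]; apply: (ym m k) => //.
    rewrite leqNgt; apply/negP => ltkm; apply: nk.
    exact: (xm k.+1 m ltkm).
  move=> Hb; exists k; split => //.
  have [//|nxk] := pselect (x k a).
  by have := kmin k nxk; rewrite ltnn.
Qed.
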